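(* Let $\Phi=\{\varphi_n\}_{n=1}^N\subseteq\mathbb{R}^M$ and let $\mathcal{A}\colon\mathbb{R}^M/\{\pm1\}\to\mathbb{R}^N$ be defined by $(\mathcal{A}(x))(n):=|\langle x,\varphi_n\rangle|^2$. For $x\in\mathbb{R}^M$, $\mathcal{A}^{-1}(\mathcal{A}(x))=\{\pm x\}$ if and only if for every $S\subseteq\{1,\ldots,N\}$, $$x\notin\big(\operatorname{span}(\Phi_S)^\perp\setminus\{0\}\big)+\big(\operatorname{span}(\Phi_{S^\mathrm{c}})^\perp\setminus\{0\}\big).$$ Consequently, $\mathcal{A}$ is almost injective if and only if almost every $x\in\mathbb{R}^M$ lies outside this Minkowski sum for all $S\subseteq\{1,\ldots,N\}$.
   Context: For $S\subseteq\{1,\ldots,N\}$, $\Phi_S:=\{\varphi_n\}_{n\in S}$ and $S^\mathrm{c}$ is the complement of $S$ in $\{1,\ldots,N\}$; the span of the empty set is $\{0\}$. The sum $A+B=\{a+b:a\in A,b\in B\}$ is the Minkowski sum. The map $\mathcal{A}$ is called almost injective if $\mathcal{A}^{-1}(\mathcal{A}(x))=\{\pm x\}$ for (Lebesgue) almost every $x\in\mathbb{R}^M$. *)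

(* Defs.v *)
From mathcomp Require Import all_boot all_order all_algebra.
From mathcomp Require Import boolp classical_sets reals.
Set Implicit Arguments. Unset Strict Implicit. Unset Printing Implicit Defensive.
Import Order.TTheory GRing.Theory Num.Theory.
Local Open Scope ring_scope.
Local Open Scope classical_set_scope.

Definition dotv (R : realType) (M : nat) (x y : 'rV[R]_M) : R :=
  \sum_(i < M) x ord0 i * y ord0 i.

Definition intensity (R : realType) (M N : nat) (phi : 'I_N -> 'rV[R]_M)
  (x : 'rV[R]_M) : 'I_N -> R := fun n => `|dotv x (phi n)| ^+ 2.

Definition span_of (R : realType) (M N : nat) (phi : 'I_N -> 'rV[R]_M)
  (S : {set 'I_N}) : set 'rV[R]_M :=
  [set v | exists c : 'I_N -> R, v = \sum_(n in S) c n *: phi n].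

Definition orth (R : realType) (M : nat) (V : set 'rV[R]_M) : set 'rV[R]_M :=
  [set y | forall v, V v -> dotv y v = 0].

Definition minkowski (R : realType) (M : nat) (A B : set 'rV[R]_M) : set 'rV[R]_M :=
  [set x | exists a b, A a /\ B b /\ x = a + b].

Definition bad_set (R : realType) (M N : nat) (phi : 'I_N -> 'rV[R]_M)
  (S : {set 'I_N}) : set 'rV[R]_M :=
  minkowski (orth (span_of phi S) `\ 0) (orth (span_of phi (~: S)) `\ 0).

Definition box (R : realType) (M : nat) (a b : 'rV[R]_M) : set 'rV[R]_M :=
  [set x | forall i, a ord0 i <= x ord0 i <= b ord0 i].
Definition box_vol (R : realType) (M : nat) (a b : 'rV[R]_M) : R :=
  \prod_(i < M) (b ord0 i - a ord0 i).

Definition lebesgue_null (R : realType) (M : nat) (E : set 'rV[R]_M) : Prop :=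
  forall eps : R, 0 < eps ->
  exists a b : nat -> 'rV[R]_M,
    (forall k i, a k ord0 i <= b k ord0 i) /\
    E `<=` \bigcup_k box (a k) (b k) /\
    (forall n, \sum_(k < n) box_vol (a k) (b k) <= eps).

Definition ae_Rn (R : realType) (M : nat) (P : 'rV[R]_M -> Prop) : Prop :=
  lebesgue_null [set x | ~ P x].

Definition recovers (R : realType) (M N : nat) (phi : 'I_N -> 'rV[R]_M)
  (x : 'rV[R]_M) : Prop :=
  [set y | intensity phi y = intensity phi x] = [set x; - x].

Definition almost_injective (R : realType) (M N : nat) (phi : 'I_N -> 'rV[R]_M) : Prop :=
  ae_Rn (recovers phi).

(* Main.v *)
Require Import Defs.
From mathcomp Require Import all_boot all_order all_algebra.
From mathcomp Require Import boolp classical_sets reals.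
Local Open Scope ring_scope.
Local Open Scope classical_set_scope.
Import GRing.Theory Num.Theory.

Section Aux.
Variables (R : realType) (M N : nat) (phi : 'I_N -> 'rV[R]_M).

Lemma dotvDl (x y v : 'rV[R]_M) : dotv (x + y) v = dotv x v + dotv y v.
Proof. rewrite /dotv -big_split; apply: eq_bigr => i _; by rewrite mxE mulrDl. Qed.

Lemma dotvNl (x v : 'rV[R]_M) : dotv (- x) v = - dotv x v.
Proof. rewrite /dotv -sumrN; apply: eq_bigr => i _; by rewrite mxE mulNr. Qed.

Lemma dotvZl (k : R) (x v : 'rV[R]_M) : dotv (k *: x) v = k * dotv x v.
Proof. rewrite /dotv mulr_sumr; apply: eq_bigr => i _; by rewrite mxE mulrA. Qed.

Lemma dotv_sumr (x : 'rV[R]_M) (S : {set 'I_N}) (c : 'I_N -> R) :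
  dotv x (\sum_(n in S) c n *: phi n) = \sum_(n in S) c n * dotv x (phi n).
Proof.
rewrite /dotv.
under eq_bigr do rewrite summxE mulr_sumr.
rewrite exchange_big /=; apply: eq_bigr => n _; rewrite mulr_sumr.
by apply: eq_bigr => i _; rewrite mxE mulrCA.
Qed.

Lemma orth_spanP (a : 'rV[R]_M) (S : {set 'I_N}) :
  orth (span_of phi S) a <-> (forall n, n \in S -> dotv a (phi n) = 0).
Proof.
split.
- move=> H n nS; apply: H; exists (fun m => (m == n)%:R).
  rewrite (bigD1 n) //= eqxx scale1r big1 ?addr0 // => m /andP[_ /negbTE ->].
  by rewrite scale0r.
- move=> H v [c ->]; rewrite dotv_sumr big1 // => n nS; by rewrite H // mulr0.
Qed.

Lemma eqN0 (v : 'rV[R]_M) : v = - v -> v = 0.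
Proof.
move=> /eqP; rewrite -subr_eq0 opprK => /eqP H.
have : (2%:R : R) *: v = 0 by rewrite scaler_nat mulr2n.
by move/eqP; rewrite scaler_eq0 pnatr_eq0 /= => /eqP.
Qed.

Lemma sqr_abs_eq (t s : R) : `|t| ^+ 2 = `|s| ^+ 2 -> t = s \/ t = - s.
Proof.
rewrite !real_normK ?num_real // => /eqP; rewrite eqf_sqr => /orP[] /eqP; by [left|right].
Qed.

End Aux.

Theorem lemma9 (R : realType) (M N : nat) (phi : 'I_N -> 'rV[R]_M) :
  (forall x : 'rV[R]_M,
     recovers phi x <-> (forall S : {set 'I_N}, ~ bad_set phi S x)) /\
  (almost_injective phi <->
     ae_Rn (fun x => forall S : {set 'I_N}, ~ bad_set phi S x)).
Proof.
have H1 : forall x : 'rV[R]_M,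
     recovers phi x <-> (forall S : {set 'I_N}, ~ bad_set phi S x).
  move=> x; split.
  - move=> Hr S [a [b [[Ha a0] [[Hb b0] xE]]]].
    move/orth_spanP: Ha => Ha; move/orth_spanP: Hb => Hb.
    have Hy : intensity phi (a - b) = intensity phi x.
      apply: funext => n; rewrite /intensity xE !dotvDl dotvNl.
      case nS: (n \in S).
        by rewrite Ha // !add0r normrN.
      by rewrite Hb ?inE ?nS // oppr0 !addr0.
    have : [set x; - x] (a - b) by rewrite -Hr.
    case=> /= E.
    + apply: b0; apply: eqN0; apply: (addrI a); by rewrite -xE -E.
    + apply: a0; apply: eqN0; apply: (addIr (- b)).
      by rewrite E xE opprD addrC.
  - move=> Hall; rewrite /recovers; apply/seteqP; split; last first.
      move=> y [] /= ->; first by [].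
      apply: funext => n; by rewrite /intensity dotvNl normrN.
    move=> y /= Hy.
    have [->|nx] := eqVneq y x; first by left.
    have [->|nmx] := eqVneq y (- x); first by right.
    exfalso.
    have Hn : forall n, dotv y (phi n) = dotv x (phi n) \/ dotv y (phi n) = - dotv x (phi n).
      move=> n; apply: sqr_abs_eq; by have := congr1 (fun f => f n) Hy.
    pose S : {set 'I_N} := finset (fun n => dotv x (phi n) == dotv y (phi n)).
    apply: (Hall S).
    exists ((2%:R : R)^-1 *: (x - y)), ((2%:R : R)^-1 *: (x + y)).
    have h2 : (2%:R : R) != 0 by rewrite pnatr_eq0.
    split; [split|split; [split|]].
    + apply/orth_spanP => n; rewrite inE => /eqP E.
      by rewrite dotvZl dotvDl dotvNl E subrr mulr0.
    + move=> /= /eqP; rewrite scaler_eq0 invr_eq0 (negbTE h2) /= subr_eq0.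
      by rewrite eq_sym (negbTE nx).
    + apply/orth_spanP => n; rewrite !inE => nS.
      rewrite dotvZl dotvDl.
      case: (Hn n) => E.
        by rewrite E eqxx in nS.
      by rewrite E subrr mulr0.
    + move=> /= /eqP; rewrite scaler_eq0 invr_eq0 (negbTE h2) /= addr_eq0.
      by rewrite -eqr_oppLR eq_sym (negbTE nmx).
    + rewrite -scalerDr addrCA subrK -mulr2n -scaler_nat scalerA mulVf //.
      by rewrite scale1r.
split=> //.
have E : recovers phi = (fun x => forall S : {set 'I_N}, ~ bad_set phi S x).
  apply: funext => x; apply: propext; exact: H1.
by rewrite /almost_injective E.
Qed.
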